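(* Let $(X,d,\mu)$, $p$, $\underline{Q}_\mu$ be as in the context. Fix $\underline{\theta}\in[0,\min\{p,\underline{Q}_\mu\})$, $\theta\in[\underline{\theta},p)$, an integer $N\ge2$, numbers $0\le\theta_1<\dots<\theta_N=\underline{\theta}$, closed sets $S^i\in\mathcal{ADR}_{\theta_i}(X)$, and $\mathfrak m_k:=\sum_{i=1}^N2^{k(\theta-\theta_i)}\mathcal H_{\theta_i}\lfloor_{S^i}$, $k\in\mathbb N_0$. Then for each $c\ge1$ there is a constant $C>0$ such that for each $i\in\{1,\dots,N\}$ and each $k\in\mathbb N_0$ the following holds: if $\underline x\in X$ and $x\in S^i$ satisfy $B_k(x)\subset cB_k(\underline x)$, then $$2^{k(\theta-\theta_i)}\mathcal H_{\theta_i}(cB_k(\underline x)\cap S^i)\le\mathfrak m_k(cB_k(\underline x))\le C2^{k(\theta-\theta_i)}\mathcal H_{\theta_i}(B_k(x)\cap S^i).$$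
   Context: Standing setting: $(X,d)$ complete separable metric space, $\mu$ a Borel regular locally finite outer measure, $\operatorname{supp}\mu=X$, uniformly locally doubling (for every $R>0$, $\sup_{r\in(0,R]}\sup_x\mu(B_{2r}(x))/\mu(B_r(x))<\infty$). Balls are closed, $B_r(x)=\{y:d(x,y)\le r\}$, $cB_r(x)=B_{cr}(x)$, $B_k(x)=B_{2^{-k}}(x)$. A fixed $p\in(1,\infty)$; $X$ supports a weak local $(1,p)$-Poincaré inequality (for every $R>0$ there are $C,\lambda\ge1$ with $\inf_c\frac{1}{\mu(B_r(x))}\int_{B_r(x)}|f-c|d\mu\le Cr(\frac{1}{\mu(B_{\lambda r}(x))}\int_{B_{\lambda r}(x)}(\operatorname{lip}f)^pd\mu)^{1/p}$ for Lipschitz $f$, $x\in X$, $r\in(0,R]$). $\underline{Q}_\mu$ is the infimum of $Q>0$ such that for every $R>0$ there is $C$ with $(r_{B'}/r_B)^Q\le C\mu(B')/\mu(B)$ for balls $B'\subset B$, $0<r_{B'}\le r_B\le R$. $\mathcal H_{\vartheta,\delta}(E):=\inf\{\sum\mu(B_{r_i}(x_i))r_i^{-\vartheta}:E\subset\bigcup B_{r_i}(x_i),0<r_i<\delta\}$, $\mathcal H_\vartheta=\lim_{\delta\to0}\mathcal H_{\vartheta,\delta}$; $\mathfrak m\lfloor_S(E)=\mathfrak m(E\cap S)$. $\mathcal{ADR}_\vartheta(X)$: closed $S'$ with $\varkappa_1\mu(B_r(x))r^{-\vartheta}\le\mathcal H_\vartheta(B_r(x)\cap S')\le\varkappa_2\mu(B_r(x))r^{-\vartheta}$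 for $x\in S'$, $r\in(0,1]$. *)

(* Defs.v *)
From HB Require Import structures.
From mathcomp Require Import all_boot all_order all_algebra.
From mathcomp Require Import all_classical all_reals all_analysis.
Set Implicit Arguments. Unset Strict Implicit. Unset Printing Implicit Defensive.
Import Order.TTheory GRing.Theory Num.Theory.
Import numFieldNormedType.Exports.
Local Open Scope classical_set_scope.
Local Open Scope ring_scope.

Section MetricMeasure.
Variables (R : realType) (X : pointedType) (d : X -> X -> R).

Definition is_metric : Prop :=
  [/\ forall x y, 0 <= d x y, forall x y, d x y = 0 <-> x = y,
      forall x y, d x y = d y x
    & forall x y z, d x z <= d x y + d y z].

Definition cball (x : X) (r : R) : set X := [set y | d x y <= r].
(** open ball, only used to define the topology *)
Definition oball (x : X) (r : R) : set X := [set y | d x y < r].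

Definition dopen (U : set X) : Prop :=
  forall x, U x -> exists2 r, 0 < r & oball x r `<=` U.
Definition dclosed (F : set X) : Prop := dopen (~` F).

Definition borel_sets : set (set X) := <<s dopen >>.

Definition complete_metric : Prop :=
  forall u : nat -> X,
    (forall e, 0 < e -> exists M, forall m n, (M <= m)%N -> (M <= n)%N ->
        d (u m) (u n) < e) ->
    exists l, forall e, 0 < e -> exists M, forall n, (M <= n)%N -> d (u n) l < e.

Definition separable_metric : Prop :=
  exists D : set X, countable D /\
    forall x e, 0 < e -> exists2 y, D y & d x y < e.

Variable mu : {outer_measure set X -> \bar R}.

Definition borel_regular : Prop :=
  (forall B, borel_sets B -> mu.-caratheodory B) /\
  (forall A, exists B, [/\ borel_sets B, A `<=` B & mu A = mu B]).

Definition locally_finite : Prop :=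
  forall x, exists2 r, 0 < r & (mu (cball x r) < +oo)%E.

(** supp mu = X : every ball of positive radius has positive measure *)
Definition full_support : Prop :=
  forall x r, 0 < r -> (0 < mu (cball x r))%E.

Definition unif_loc_doubling : Prop :=
  forall R0, 0 < R0 -> exists C : R, forall x r, 0 < r -> r <= R0 ->
    (mu (cball x (2 * r)) <= C%:E * mu (cball x r))%E.

Definition standing_assumptions : Prop :=
  [/\ is_metric, complete_metric, separable_metric, borel_regular
    & [/\ locally_finite, full_support & unif_loc_doubling]].

(** integration with respect to mu (restricted to its Caratheodory sets,
    which contain the Borel sets by Borel regularity) *)
Definition mu_int (D : set X) (f : X -> \bar R) : \bar R :=
  \int[(mu : set (caratheodory_type mu) -> \bar R)]_(x in D) f x.

Definition lipschitz (f : X -> R) : Prop :=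
  exists L : R, forall x y, `|f x - f y| <= L * d x y.

(** pointwise lower Lipschitz constant
    lip f(x) = liminf_{r -> 0+} sup_{y in B_r(x)} |f y - f x| / r *)
Definition lip (f : X -> R) (x : X) : \bar R :=
  ereal_sup [set ereal_inf
      [set ereal_sup [set ((`|f y - f x|) / r)%:E | y in cball x r]
        | r in [set r : R | 0 < r < delta]]
    | delta in [set delta : R | 0 < delta]].

Definition poincare (p : R) : Prop :=
  forall R0, 0 < R0 -> exists C lam : R, [/\ 1 <= C, 1 <= lam &
    forall f, lipschitz f -> forall x r, 0 < r -> r <= R0 ->
      (ereal_inf [set ((fine (mu (cball x r)))^-1)%:E *
                        mu_int (cball x r) (fun y => (`|f y - c|)%:E)
                   | c in [set: R]]
       <= (C * r)%:E *
          poweR (((fine (mu (cball x (lam * r))))^-1)%:E *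
                 mu_int (cball x (lam * r)) (fun y => poweR (lip f y) p))
                (p^-1))%E].

(** lower mass exponent Q_mu (infimum, +oo if the set is empty) *)
Definition Qset : set R :=
  [set Q : R | 0 < Q /\ forall R0, 0 < R0 -> exists C : R,
     forall x x' r r', 0 < r' -> r' <= r -> r <= R0 ->
       cball x' r' `<=` cball x r ->
       powR (r' / r) Q <= C * (fine (mu (cball x' r')) / fine (mu (cball x r)))].

Definition Q_mu : \bar R := ereal_inf [set Q%:E | Q in Qset].

(** covers by (at most countably many) closed balls of radii in (0,delta):
    a cover is a sequence of optional (center, radius) pairs *)
Definition ball_cover (delta : R) (E : set X) (c : nat -> option (X * R)) : Prop :=
  (forall i xr, c i = Some xr -> 0 < xr.2 < delta) /\
  E `<=` \bigcup_i [set y | exists xr, c i = Some xr /\ d xr.1 y <= xr.2].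

Definition cover_weight (theta : R) (c : nat -> option (X * R)) (i : nat) : \bar R :=
  match c i with
  | Some xr => (mu (cball xr.1 xr.2) * (powR xr.2 (- theta))%:E)%E
  | None => 0%E
  end.

Definition Hcont (theta delta : R) (E : set X) : \bar R :=
  ereal_inf [set (\sum_(i <oo) cover_weight theta c i)%E
             | c in ball_cover delta E].

(** H_theta = lim_{delta -> 0} H_{theta,delta} (= sup over delta > 0,
    since H_{theta,delta} is nonincreasing in delta) *)
Definition Hmeas (theta : R) (E : set X) : \bar R :=
  ereal_sup [set Hcont theta delta E | delta in [set delta : R | 0 < delta]].

Definition ADR (theta : R) (S : set X) : Prop :=
  dclosed S /\ exists k1 k2 : R, 0 < k1 /\
    forall x r, S x -> 0 < r -> r <= 1 ->
      (k1%:E * (mu (cball x r) * (powR r (- theta))%:E)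
         <= Hmeas theta (cball x r `&` S)
       /\ Hmeas theta (cball x r `&` S)
         <= k2%:E * (mu (cball x r) * (powR r (- theta))%:E))%E.

(** m_k(E) = sum_i 2^{k(theta - theta_i)} H_{theta_i}(E cap S^i),
    indices shifted to 0 .. N-1 *)
Definition mk (N : nat) (theta : R) (thi : nat -> R) (S : nat -> set X)
    (k : nat) (E : set X) : \bar R :=
  (\sum_(i < N) (powR 2 (k%:R * (theta - thi i)))%:E * Hmeas (thi i) (E `&` S i))%E.

End MetricMeasure.

(* Main.v *)
Require Import Defs.
From HB Require Import structures.
From mathcomp Require Import all_boot all_order all_algebra.
From mathcomp Require Import all_classical all_reals all_analysis.
From mathcomp Require Import ring lra.
Import Order.TTheory GRing.Theory Num.Theory.
Local Open Scope classical_set_scope.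
Local Open Scope ring_scope.


Lemma nneseries_le_ub (R : realType) (u : nat -> \bar R) (M : \bar R) :
  (forall n, (0 <= u n)%E) -> (forall k, (\sum_(0 <= i < k) u i <= M)%E) ->
  (\sum_(i <oo) u i <= M)%E.
Proof.
move=> u0 uM.
have h : nondecreasing_seq (fun n => \sum_(0 <= i < n | true) u i).
  by apply: ereal_nondecreasing_series => n _ _; exact: u0.
rewrite (cvg_lim _ (ereal_nondecreasing_cvgn h)) //.
by apply: ge_ereal_sup => _ [k _ <-]; exact: uM.
Qed.

Section HM.
Variables (R : realType) (X : pointedType) (d : X -> X -> R).
Variable mu : {outer_measure set X -> \bar R}.

Lemma cover_weight_ge0 th c i : (0 <= cover_weight d mu th c i)%E.
Proof.
rewrite /cover_weight; case: (c i) => [xr|] //.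
by apply: mule_ge0; [exact: outer_measure_ge0 | rewrite lee_fin powR_ge0].
Qed.

Lemma Hcont_ge0 th de E : (0 <= Hcont d mu th de E)%E.
Proof.
apply: le_ereal_inf_tmp => _ [c _ <-].
by apply: nneseries_ge0 => n _ _; exact: cover_weight_ge0.
Qed.

Lemma Hcont_le_Hmeas th de E : 0 < de -> (Hcont d mu th de E <= Hmeas d mu th E)%E.
Proof. by move=> de0; apply: ereal_sup_ubound; exists de. Qed.

Lemma Hmeas_ge0 th E : (0 <= Hmeas d mu th E)%E.
Proof. apply: (le_trans (Hcont_ge0 th 1 E)); exact: Hcont_le_Hmeas. Qed.

Lemma Hmeas_mono th A B : A `<=` B -> (Hmeas d mu th A <= Hmeas d mu th B)%E.
Proof.
move=> AB; apply: ge_ereal_sup => _ [de de0 <-].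
apply: le_trans (Hcont_le_Hmeas _ _ _ de0).
apply: ereal_inf_le_tmp => _ [c [c1 c2] <-]; exists c => //; split => //.
exact: subset_trans c2.
Qed.

Lemma Hmeas_set0 th : Hmeas d mu th set0 = 0%E.
Proof.
apply/eqP; rewrite eq_le Hmeas_ge0 andbT.
apply: ge_ereal_sup => _ [de de0 <-].
apply: ereal_inf_lbound; exists (fun _ => None).
  by split => // i xr.
by rewrite eseries0.
Qed.

Definition interl (ca cb : nat -> option (X * R)) (i : nat) :=
  if odd i then cb i./2 else ca i./2.

Lemma interl_sum th ca cb k :
  (\sum_(0 <= i < k.*2) cover_weight d mu th (interl ca cb) i =
   \sum_(0 <= i < k) cover_weight d mu th ca i + \sum_(0 <= i < k) cover_weight d mu th cb i)%E.
Proof.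
elim: k => [|k IH]; first by rewrite double0 !big_geq // adde0.
rewrite doubleS !big_nat_recr //= IH.
have -> : cover_weight d mu th (interl ca cb) k.*2 = cover_weight d mu th ca k.
  by rewrite /cover_weight /interl odd_double doubleK.
have -> : cover_weight d mu th (interl ca cb) k.*2.+1 = cover_weight d mu th cb k.
  by rewrite /cover_weight /interl /= odd_double /= uphalf_double.
by rewrite -!addeA; congr (_ + _)%E; rewrite addeCA.
Qed.

Lemma Hcont_subadd th de A B :
  (Hcont d mu th de (A `|` B) <= Hcont d mu th de A + Hcont d mu th de B)%E.
Proof.
have key : forall ca cb, ball_cover d de A ca -> ball_cover d de B cb ->
  (Hcont d mu th de (A `|` B) <= \sum_(i <oo) cover_weight d mu th ca i
                                + \sum_(i <oo) cover_weight d mu th cb i)%E.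
  move=> ca cb [ca1 ca2] [cb1 cb2].
  apply: (le_trans (ereal_inf_lbound _)).
    exists (interl ca cb) => //; split.
      by move=> i xr; rewrite /interl; case: ifP => _; [exact: cb1 | exact: ca1].
    move=> y [/ca2 [i _ Hi]|/cb2 [i _ Hi]].
      by exists i.*2 => //; rewrite /interl odd_double doubleK.
    by exists i.*2.+1 => //; rewrite /interl /= odd_double /= uphalf_double.
  apply: nneseries_le_ub; first by move=> n; exact: cover_weight_ge0.
  move=> k; apply: (@le_trans _ _ (\sum_(0 <= i < k.*2) cover_weight d mu th (interl ca cb) i)%E).
    have hk : (k <= k.*2)%N by rewrite -addnn leq_addr.
    rewrite (@big_cat_nat _ _ _ k 0 k.*2) //=.
    by rewrite leeDl // sume_ge0 // => i _; exact: cover_weight_ge0.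
  rewrite interl_sum; apply: leeD; apply: nneseries_lim_ge => n _ _; exact: cover_weight_ge0.
set HA := Hcont d mu th de A; set HB := Hcont d mu th de B.
have HA0 : (0 <= HA)%E by apply: Hcont_ge0.
have HB0 : (0 <= HB)%E by apply: Hcont_ge0.
have step1 : forall cb, ball_cover d de B cb ->
  (Hcont d mu th de (A `|` B) <= HA + \sum_(i <oo) cover_weight d mu th cb i)%E.
  move=> cb hcb; set b := (\sum_(i <oo) _)%E.
  have b0 : (0 <= b)%E by apply: nneseries_ge0 => n _ _; exact: cover_weight_ge0.
  have [bfin|] := boolP (b \is a fin_num); last first.
    by rewrite ge0_fin_numE // -leNgt leye_eq => /eqP ->; rewrite addey ?leey // gt_eqF // (lt_le_trans _ HA0).
  rewrite -leeBlDr //; apply: le_ereal_inf_tmp => _ [ca hca <-].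
  by rewrite leeBlDr //; exact: key.
have [afin|] := boolP (HA \is a fin_num); last first.
  by rewrite ge0_fin_numE // -leNgt leye_eq => /eqP ->; rewrite addye ?leey // gt_eqF // (lt_le_trans _ HB0).
rewrite addeC -leeBlDr //; apply: le_ereal_inf_tmp => _ [cb hcb <-].
by rewrite leeBlDr // addeC; exact: step1.
Qed.
End HM.

Section HM2.
Variables (R : realType) (X : pointedType) (d : X -> X -> R).
Variable mu : {outer_measure set X -> \bar R}.

Lemma Hmeas_subadd th A B :
  (Hmeas d mu th (A `|` B) <= Hmeas d mu th A + Hmeas d mu th B)%E.
Proof.
apply: ge_ereal_sup => _ [de de0 <-].
apply: (le_trans (Hcont_subadd _ _ d mu th de A B)).
by apply: leeD; exact: Hcont_le_Hmeas.
Qed.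

Lemma Hmeas_fin_union th (A : nat -> set X) n E :
  E `<=` [set y | exists2 l, (l < n)%N & A l y] ->
  (Hmeas d mu th E <= \sum_(l < n) Hmeas d mu th (A l))%E.
Proof.
elim: n E => [|n IH] E hE.
  rewrite big_ord0; apply: (le_trans (Hmeas_mono _ _ d mu th E set0 _)).
    by move=> y /hE [].
  by rewrite Hmeas_set0.
rewrite big_ord_recr /=.
apply: (le_trans (Hmeas_mono _ _ d mu th E ([set y | exists2 l, (l < n)%N & A l y] `|` A n) _)).
  move=> y /hE [l]; rewrite ltnS leq_eqVlt => /orP [/eqP -> | hl] hy; first by right.
  by left; exists l.
apply: (le_trans (Hmeas_subadd _ _ _)); apply: leeD => //.
exact: IH.
Qed.
End HM2.


Lemma exists_pow2 (R : realType) (a : R) : exists m : nat, a <= 2 ^+ m.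
Proof.
case: (lerP a 0) => ha; first by exists 0%N; rewrite expr0; lra.
exists (Num.trunc a).+1.
apply: ltW; apply: (lt_le_trans (truncnS_gt a)).
rewrite -natrX ler_nat; apply: ltnW; exact: ltn_expl.
Qed.

Section Geo.
Variables (R : realType) (X : pointedType) (d : X -> X -> R).
Variable mu : {outer_measure set X -> \bar R}.
Hypothesis hmet : is_metric d.

Lemma dsym x y : d x y = d y x.
Proof. by case: hmet. Qed.
Lemma dtri x y z : d x z <= d x y + d y z.
Proof. by case: hmet. Qed.
Lemma dge0 x y : 0 <= d x y.
Proof. by case: hmet. Qed.
Lemma dxx x : d x x = 0.
Proof. by case: hmet => _ h _ _; apply/h. Qed.

Lemma ball_sub x y r s : d y x + r <= s -> cball d x r `<=` cball d y s.
Proof.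
move=> h z; rewrite /cball /= => hz.
have := dtri y x z; lra.
Qed.

Lemma ball_mono x r s : r <= s -> cball d x r `<=` cball d x s.
Proof. move=> h z; rewrite /cball /= => hz; lra. Qed.

Lemma ball_carath : borel_regular d mu -> forall x r, mu.-caratheodory (cball d x r).
Proof.
move=> [hB _] x r; apply: hB.
rewrite -[cball _ _ _]setCK; apply: sigma_algebraC; apply: sub_sigma_algebra.
move=> z /= hz.
have hz' : r < d x z by rewrite ltNge; apply/negP => h; apply: hz.
exists (d x z - r); first by rewrite subr_gt0.
move=> w; rewrite /oball /= => hw; rewrite /cball /= => hxw.
have := dtri x w z; rewrite (dsym w z); lra.
Qed.

Lemma disj_sum (f : nat -> set X) n (E : set X) :
  (forall l, (l < n)%N -> mu.-caratheodory (f l)) ->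
  (forall l l' z, (l < l')%N -> (l' < n)%N -> f l z -> f l' z -> False) ->
  (forall l, (l < n)%N -> f l `<=` E) ->
  (\sum_(l < n) mu (f l) <= mu E)%E.
Proof.
elim: n E => [|n IH] E hc hd hs; first by rewrite big_ord0 outer_measure_ge0.
rewrite big_ord_recr /= (hc n (ltnSn n) E).
have -> : E `&` f n = f n by apply/setIidr; exact: hs.
rewrite addeC; apply: leeD => //.
apply: IH.
- by move=> l hl; apply: hc; exact: ltnW.
- by move=> l l' z h1 h2; apply: hd => //; exact: ltnW.
- move=> l hl z hz; split; first by apply: (hs l (ltnW hl)).
  by move=> hz'; apply: (hd l n z hl (ltnSn n)).
Qed.

Lemma dbl_const : unif_loc_doubling d mu -> forall R0, 0 < R0 ->
  exists Cd : R, 1 <= Cd /\ forall x r, 0 < r -> r <= R0 ->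
    (mu (cball d x (2 * r)) <= Cd%:E * mu (cball d x r))%E.
Proof.
move=> hdbl R0 R00; have [C hC] := hdbl R0 R00.
exists (Num.max C 1); split; first by rewrite le_max lexx orbT.
move=> x r r0 rR; apply: (le_trans (hC x r r0 rR)).
apply: lee_wpmul2r; first exact: outer_measure_ge0.
by rewrite lee_fin le_max lexx.
Qed.

Lemma dbl_iter (R0 Cd : R) : 1 <= Cd ->
  (forall x r, 0 < r -> r <= R0 -> (mu (cball d x (2 * r)) <= Cd%:E * mu (cball d x r))%E) ->
  forall m x s, 0 < s -> 2 ^+ m * s <= R0 ->
  (mu (cball d x (2 ^+ m * s)) <= (Cd ^+ m)%:E * mu (cball d x s))%E.
Proof.
move=> hC hD; elim => [|m IH] x s s0 hs.
  by rewrite !expr0 mul1r mul1e.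
have h1 : 0 < 2 ^+ m * s by apply: mulr_gt0 => //; exact: exprn_gt0.
have h2 : 2 ^+ m * s <= R0.
  apply: le_trans hs; rewrite exprS -mulrA; lra.
rewrite exprS -mulrA; apply: (le_trans (hD x _ h1 h2)).
rewrite exprS EFinM -muleA; apply: lee_wpmul2l; first by rewrite lee_fin; lra.
exact: IH.
Qed.

Lemma ball_fin : locally_finite d mu -> unif_loc_doubling d mu ->
  forall x r, (mu (cball d x r) < +oo)%E.
Proof.
move=> hlf hdbl x r; have [r0 r00 hr0] := hlf x.
have [m hm] := exists_pow2 _ (r / r0).
have hR0 : 0 < 2 ^+ m * r0 by apply: mulr_gt0 => //; exact: exprn_gt0.
have [Cd [hC hD]] := dbl_const hdbl _ hR0.
apply: (le_lt_trans (le_outer_measure mu _ (cball d x (2 ^+ m * r0)) _)).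
  apply: ball_mono; rewrite -ler_pdivrMr //.
have := dbl_iter _ _ hC hD m x r0 r00 (lexx _).
move=> /le_lt_trans; apply.
have : (mu (cball d x r0) \is a fin_num) by rewrite ge0_fin_numE // outer_measure_ge0.
by move/fineK <-; rewrite -EFinM ltry.
Qed.

End Geo.


Section Sep.
Variables (R : realType) (X : pointedType) (d : X -> X -> R).
Variable mu : {outer_measure set X -> \bar R}.
Hypothesis hmet : is_metric d.
Hypothesis hB : borel_regular d mu.
Hypothesis hfin : forall x r, (mu (cball d x r) < +oo)%E.
Hypothesis hsupp : full_support d mu.

Lemma muE x r : mu (cball d x r) = (fine (mu (cball d x r)))%:E.
Proof. by rewrite fineK // ge0_fin_numE // outer_measure_ge0. Qed.

Lemma mu_gt0 x r : 0 < r -> 0 < fine (mu (cball d x r)).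
Proof. by move=> r0; rewrite -lte_fin -muE; exact: hsupp. Qed.

Lemma sep_bound y rho K (f : nat -> X) n : 0 < rho ->
  (forall z, d y z <= rho ->
     (mu (cball d y (rho + 2^-1)) <= K%:E * mu (cball d z (2^-1)))%E) ->
  (forall l, (l < n)%N -> d y (f l) <= rho) ->
  (forall l l', (l < l')%N -> (l' < n)%N -> 1 < d (f l) (f l')) ->
  n%:R <= K.
Proof.
move=> rho0 hK hin hsep.
have hsum : (\sum_(l < n) mu (cball d (f l) (2^-1)) <= mu (cball d y (rho + 2^-1)))%E.
  apply: (disj_sum _ _ mu (fun l => cball d (f l) (2^-1))).
  - by move=> l _; exact: (ball_carath _ _ _ _ hmet hB).
  - move=> l l' z h1 h2; rewrite /cball /= => hz1 hz2.
    have := hsep l l' h1 h2; have := dtri _ _ _ hmet (f l) z (f l').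
    rewrite (dsym _ _ _ hmet z (f l')); lra.
  - move=> l hl; apply: (ball_sub _ _ _ hmet) => //; have := hin l hl; lra.
set mE := fine (mu (cball d y (rho + 2^-1))).
have mE0 : 0 < mE by apply: mu_gt0; lra.
move: hsum; rewrite (eq_bigr (fun l : 'I_n => (fine (mu (cball d (f l) (2^-1))))%:E));
  last by move=> l _; rewrite -muE.
rewrite sumEFin [X in (_ <= X)%E]muE lee_fin => hsum.
have hl : forall l : 'I_n, mE <= K * fine (mu (cball d (f l) (2^-1))).
  move=> l; rewrite -lee_fin EFinM -!muE; apply: hK; exact: hin.
have K0 : 0 < K.
  have := hK y; rewrite dxx; last exact: hmet.
  move=> /(_ (ltW rho0)); rewrite (muE y (2^-1)) [X in (X <= _)%E]muE -EFinM lee_fin => h.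
  have m0 : 0 < fine (mu (cball d y 2^-1)) by apply: mu_gt0.
  rewrite -/mE in h; nra.
have : n%:R * mE <= K * mE.
  apply: (le_trans _ (ler_wpM2l (ltW K0) hsum)).
  rewrite mulr_sumr -[n in n%:R]card_ord -sumr_const mulr_suml.
  by apply: ler_sum => l _; rewrite mul1r; exact: hl.
by rewrite ler_pM2r.
Qed.
Lemma max_sep (A : set X) (K : R) :
  (forall (f : nat -> X) n, (forall l, (l < n)%N -> A (f l)) ->
     (forall l l', (l < l')%N -> (l' < n)%N -> 1 < d (f l) (f l')) -> n%:R <= K) ->
  exists (f : nat -> X) n, [/\ (forall l, (l < n)%N -> A (f l)),
     (forall l l', (l < l')%N -> (l' < n)%N -> 1 < d (f l) (f l')) &
     forall z, A z -> exists l, (l < n)%N /\ d (f l) z <= 1].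
Proof.
move=> hb.
pose P n := `[< exists f : nat -> X, (forall l, (l < n)%N -> A (f l)) /\
     (forall l l', (l < l')%N -> (l' < n)%N -> 1 < d (f l) (f l')) >].
have P0 : P 0%N by apply/asboolP; exists (fun _ => point); split.
have K0 : 0 <= K by have := hb (fun _ => point) 0%N (fun l (h : (l < 0)%N) => False_ind _ (notF h))
   (fun l l' _ (h : (l' < 0)%N) => False_ind _ (notF h)).
have ub : forall n, P n -> (n <= Num.trunc K)%N.
  move=> n /asboolP [f [h1 h2]]; rewrite truncn_ge_nat //; exact: hb h1 h2.
case: (ex_maxnP (ex_intro P 0%N P0) ub) => n /asboolP [f [hA hs]] hmax.
exists f, n; split => // z hz.
case: (pselect (exists l, (l < n)%N /\ d (f l) z <= 1)) => // hno; exfalso.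
have : P n.+1.
  apply/asboolP; exists (fun l => if l == n then z else f l); split.
    move=> l; rewrite ltnS leq_eqVlt; case: eqP => [_ _ | _ /= hl] //; exact: hA.
  move=> l l' hll' hl'; case: eqP => [hln|_].
    by exfalso; subst l; move: hll' hl'; rewrite ltnS => a b; move: (leq_trans a b); rewrite ltnn.
  case: eqP => [hl'n|hl'n].
    subst l'; rewrite ltNge; apply/negP => h; apply: hno; exists l; split => //.
  apply: hs => //; move: hl'; rewrite ltnS leq_eqVlt; case/orP => // /eqP h.
  by exfalso; apply: hl'n.
by move/hmax; rewrite ltnn.
Qed.
End Sep.


Section Claim.
Variables (R : realType) (X : pointedType) (d : X -> X -> R).
Variable mu : {outer_measure set X -> \bar R}.
Hypothesis hmet : is_metric d.
Hypothesis hB : borel_regular d mu.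
Hypothesis hfin : forall x r, (mu (cball d x r) < +oo)%E.
Hypothesis hsupp : full_support d mu.

Lemma claimG (c Cd D K2 th : R) (Sj : set X) :
  1 <= c -> 1 <= Cd -> 1 <= D -> 0 <= K2 -> 0 <= th ->
  (forall x r, Sj x -> 0 < r -> r <= 1 ->
     (Hmeas d mu th (cball d x r `&` Sj) <= K2%:E * (mu (cball d x r) * (powR r (- th))%:E))%E) ->
  (forall y z rho, 0 < rho -> rho <= 2 * c -> d y z <= rho ->
     (mu (cball d y (rho + 2^-1)) <= D%:E * mu (cball d z (2^-1)))%E) ->
  (forall y rho, 0 < rho -> rho <= 2 * c ->
     (mu (cball d y (2 * rho)) <= Cd%:E * mu (cball d y rho))%E) ->
  forall y rho, Sj y -> 0 < rho -> rho <= 1 ->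
  (Hmeas d mu th (cball d y (2 * c * rho) `&` Sj) <=
     ((D * Cd * K2) * fine (mu (cball d y (2 * c * rho))) * powR rho (- th))%:E)%E.
Proof.
move=> c1 Cd1 D1 K20 th0 hup F2 F3 y rho hy rho0 rho1.
set m := fine (mu (cball d y (2 * c * rho))).
have m0 : 0 < m by apply: (mu_gt0 _ _ _ _ hfin hsupp); nra.
have pw0 : 0 < powR rho (- th) by apply: powR_gt0.
have pw1 : 1 <= powR rho (- th).
  rewrite -(powRr0 rho); apply: ger_powR; [by rewrite rho0 | lra].
have DCK : K2 <= D * Cd * K2.
  rewrite -[X in X <= _]mul1r; apply: ler_wpM2r => //; nra.
case: (lerP (2 * c * rho) 1) => hr.
  apply: (le_trans (hup y _ hy _ hr)); first nra.
  rewrite (muE _ _ _ _ hfin) -/m -!EFinM lee_fin.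
  have h2 : powR (2 * c * rho) (- th) <= powR rho (- th).
    rewrite powRM; [|nra|lra].
    have : powR (2 * c) (- th) <= 1.
      rewrite -[X in _ <= X](powRr0 (2 * c)); have hh : 1 <= 2 * c by lra.
      apply: (ler_powR hh); lra.
    have := powR_ge0 (2 * c) (- th); nra.
  apply: (@le_trans _ _ (K2 * (m * powR rho (- th)))).
    by apply: ler_wpM2l => //; apply: ler_wpM2l => //; exact: ltW.
  rewrite -mulrA; apply: ler_wpM2r => //; apply: mulr_ge0; exact: ltW.
set rp := 2 * c * rho.
have rp1 : 1 < rp by [].
have rp2 : rp <= 2 * c by rewrite /rp; nra.
set A := cball d y rp `&` Sj.
have hsepb : forall (f : nat -> X) n, (forall l, (l < n)%N -> A (f l)) ->
     (forall l l', (l < l')%N -> (l' < n)%N -> 1 < d (f l) (f l')) -> n%:R <= D.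
  move=> f n hA hs; apply: (sep_bound _ _ _ _ hmet hB hfin hsupp y rp D f n) => //.
  - lra.
  - move=> z hz; apply: F2 => //; lra.
  - by move=> l hl; case: (hA l hl).
have [f [n [hA hs hcov]]] := max_sep _ _ _ A D hsepb.
have hn : n%:R <= D by exact: (hsepb f n hA hs).
apply: (le_trans (Hmeas_fin_union _ _ d mu th (fun l => cball d (f l) 1 `&` Sj) n A _)).
  move=> z hz; have [l [hl hd]] := hcov z hz; exists l => //; split; first exact: hd.
  by case: hz.
have hterm : forall l, (l < n)%N ->
    (Hmeas d mu th (cball d (f l) 1 `&` Sj) <= (K2 * (Cd * m))%:E)%E.
  move=> l hl; have [hfl1 hfl2] := hA l hl.
  apply: (le_trans (hup (f l) 1 hfl2 ltr01 (lexx 1))).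
  rewrite powR1 /= mule1 EFinM; apply: lee_wpmul2l; first by rewrite lee_fin.
  apply: (@le_trans _ _ (mu (cball d y (2 * rp)))).
    apply: le_outer_measure; apply: (ball_sub _ _ _ hmet).
    move: hfl1; rewrite /cball /= => hfl1; lra.
  apply: (le_trans (F3 y rp _ rp2)); first lra.
  by rewrite (muE _ _ _ _ hfin y rp) -EFinM.
apply: (@le_trans _ _ (\sum_(l < n) (K2 * (Cd * m))%:E)%E).
  by apply: lee_sum => l _; exact: hterm.
rewrite sumEFin sumr_const card_ord lee_fin -mulr_natr.
have q0 : 0 <= K2 * (Cd * m) by apply: mulr_ge0 => //; apply: mulr_ge0; lra.
apply: (@le_trans _ _ (K2 * (Cd * m) * D)); first by apply: ler_wpM2l.
apply: (@le_trans _ _ (K2 * (Cd * m) * D * powR rho (- th))).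
  rewrite -[X in X <= _]mulr1; apply: ler_wpM2l => //; apply: mulr_ge0 => //; lra.
by rewrite le_eqVlt; apply/orP; left; apply/eqP; ring.
Qed.
End Claim.


Lemma pow_id (R : realType) (k : nat) (th a : R) :
  powR 2 (k%:R * (th - a)) * powR (2 ^- k) (- a) = powR 2 (k%:R * th).
Proof.
rewrite -(@powR_invn _ 2 k) ?ler0n // -powRrM -powRD; last first.
  by rewrite pnatr_eq0 implybT.
by congr powR; ring.
Qed.

Lemma adr_unif (R : realType) (X : pointedType) (d : X -> X -> R)
  (mu : {outer_measure set X -> \bar R}) (thi : nat -> R) (S : nat -> set X) N :
  (forall i, (i < N)%N -> ADR d mu (thi i) (S i)) ->
  exists K1 K2 : R, [/\ 0 < K1, 0 <= K2 & forall i, (i < N)%N ->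
    forall x r, S i x -> 0 < r -> r <= 1 ->
      (K1%:E * (mu (cball d x r) * (powR r (- thi i))%:E)
         <= Hmeas d mu (thi i) (cball d x r `&` S i)
       /\ Hmeas d mu (thi i) (cball d x r `&` S i)
         <= K2%:E * (mu (cball d x r) * (powR r (- thi i))%:E))%E].
Proof.
elim: N => [|N IH] hadr.
  by exists 1, 0; split => // i.
have [K1 [K2 [K10 K20 hK]]] := IH (fun i hi => hadr i (ltnW hi)).
have [_ [k1 [k2 [k10 hk]]]] := hadr N (ltnSn N).
exists (Num.min K1 k1), (Num.max K2 k2); split.
- by rewrite lt_min K10 k10.
- by rewrite le_max K20.
move=> i; rewrite ltnS leq_eqVlt => /orP [/eqP -> | hi] x r hx r0 r1.
  have a0 : (0 <= mu (cball d x r) * (powR r (- thi N))%:E)%E.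
    by apply: mule_ge0; [exact: outer_measure_ge0 | rewrite lee_fin powR_ge0].
  have [h1 h2] := hk x r hx r0 r1; split.
    apply: le_trans h1; apply: lee_wpmul2r => //; rewrite lee_fin ge_min lexx orbT //.
  apply: (le_trans h2); apply: lee_wpmul2r => //; rewrite lee_fin le_max lexx orbT //.
have a0 : (0 <= mu (cball d x r) * (powR r (- thi i))%:E)%E.
  by apply: mule_ge0; [exact: outer_measure_ge0 | rewrite lee_fin powR_ge0].
have [h1 h2] := hK i hi x r hx r0 r1; split.
  apply: le_trans h1; apply: lee_wpmul2r => //; rewrite lee_fin ge_min lexx //.
apply: (le_trans h2); apply: lee_wpmul2r => //; rewrite lee_fin le_max lexx //.
Qed.


Theorem proposition3p2 (R : realType) (X : pointedType) (d : X -> X -> R)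
  (mu : {outer_measure set X -> \bar R}) (p : R)
  (theta_u theta : R) (N : nat) (thi : nat -> R) (S : nat -> set X) :
  standing_assumptions d mu ->
  1 < p -> poincare d mu p ->
  0 <= theta_u -> theta_u < p -> (theta_u%:E < Q_mu d mu)%E ->
  theta_u <= theta -> theta < p ->
  (2 <= N)%N ->
  0 <= thi 0%N ->
  (forall i, (i.+1 < N)%N -> thi i < thi i.+1) ->
  thi N.-1 = theta_u ->
  (forall i, (i < N)%N -> ADR d mu (thi i) (S i)) ->
  forall c : R, 1 <= c ->
  exists C : R, 0 < C /\
    forall (i k : nat) (xu x : X), (i < N)%N -> S i x ->
      cball d x (2 ^- k) `<=` cball d xu (c * 2 ^- k) ->
      ((powR 2 (k%:R * (theta - thi i)))%:E
          * Hmeas d mu (thi i) (cball d xu (c * 2 ^- k) `&` S i)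
        <= mk d mu N theta thi S k (cball d xu (c * 2 ^- k))
       /\ mk d mu N theta thi S k (cball d xu (c * 2 ^- k))
        <= (C * powR 2 (k%:R * (theta - thi i)))%:E
          * Hmeas d mu (thi i) (cball d x (2 ^- k) `&` S i))%E.
Proof.
move=> hst hp hpoinc hu0 hup hQ huth hthp hN h0 hinc hlast hadr c c1.
case: hst => hmet hcomp hsepm hB [hlf hsupp hdbl].
have hfin := ball_fin _ _ _ _ hlf hdbl.
have thge0 : forall j, (j < N)%N -> 0 <= thi j.
  elim => [//|j IH] hj; have := hinc j hj; have := IH (ltnW hj); lra.
have [K1 [K2 [K10 K20 hK]]] := adr_unif _ _ d mu thi S N hadr.
have [M hM] := exists_pow2 _ (16 * c).
have R00 : 0 < (2:R) ^+ M by apply: exprn_gt0.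
have [Cd [Cd1 hD]] := dbl_const _ _ d mu hdbl _ R00.
set D := Cd ^+ M.
have D1 : 1 <= D by apply: exprn_ege1.
have F1 : forall x r, 0 < r -> r <= 1 ->
    (mu (cball d x (4 * c * r)) <= D%:E * mu (cball d x r))%E.
  move=> x r r0 r1.
  apply: (le_trans (le_outer_measure mu _ (cball d x (2 ^+ M * r)) _)).
    by apply: ball_mono; nra.
  apply: (dbl_iter _ _ _ _ _ _ Cd1 hD M x r r0); nra.
have F2 : forall y z rho, 0 < rho -> rho <= 2 * c -> d y z <= rho ->
     (mu (cball d y (rho + 2^-1)) <= D%:E * mu (cball d z (2^-1)))%E.
  move=> y z rho rho0 rho2 hyz.
  apply: (le_trans (le_outer_measure mu _ (cball d z (2 ^+ M * 2^-1)) _)).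
    apply: (ball_sub _ _ _ hmet); rewrite (dsym _ _ _ hmet); lra.
  apply: (dbl_iter _ _ _ _ _ _ Cd1 hD M z (2^-1)); lra.
have F3 : forall y rho, 0 < rho -> rho <= 2 * c ->
     (mu (cball d y (2 * rho)) <= Cd%:E * mu (cball d y rho))%E.
  move=> y rho rho0 rho2; apply: hD => //; lra.
set A := D * Cd * K2.
have A0 : 0 <= A by rewrite /A; apply: mulr_ge0 => //; apply: mulr_ge0; lra.
have NAD0 : 0 <= N%:R * A * D by apply: mulr_ge0; [apply: mulr_ge0 | lra].
exists ((N%:R * A * D) / K1 + 1); split.
  have : 0 <= (N%:R * A * D) / K1 by apply: divr_ge0 => //; exact: ltW.
  lra.
move=> i k xu x hi hx hsub.
set r := 2 ^- k.
have r0 : 0 < r by rewrite /r invr_gt0 exprn_gt0.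
have r1 : r <= 1 by rewrite /r invf_le1 ?exprn_gt0 // exprn_ege1 //; lra.
have hxu : d xu x <= c * r.
  have : cball d x r x by rewrite /cball /= dxx //; exact: ltW.
  by move/hsub.
have term_ge0 : forall j, (0 <= (powR 2 (k%:R * (theta - thi j)))%:E
      * Hmeas d mu (thi j) (cball d xu (c * r) `&` S j))%E.
  by move=> j; apply: mule_ge0; [rewrite lee_fin powR_ge0 | exact: Hmeas_ge0].
split.
  rewrite /mk (bigD1 (Ordinal hi)) //=.
  by apply: leeDl; apply: sume_ge0 => j _; exact: term_ge0.
set mx := fine (mu (cball d x r)).
have mx0 : 0 < mx by apply: (mu_gt0 _ _ _ _ hfin hsupp).
set T := powR 2 (k%:R * theta).
have T0 : 0 < T by apply: powR_gt0.
have hterm : forall j : 'I_N, ((powR 2 (k%:R * (theta - thi j)))%:E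
      * Hmeas d mu (thi j) (cball d xu (c * r) `&` S j) <= (A * D * mx * T)%:E)%E.
  move=> j.
  case: (pselect (exists y, (cball d xu (c * r) `&` S j) y)) => [[y [hy1 hy2]]|hno]; last first.
    have -> : cball d xu (c * r) `&` S j = set0.
      by apply/seteqP; split => // z hz; apply: hno; exists z.
    rewrite Hmeas_set0 mule0 lee_fin; apply: mulr_ge0; last exact: ltW.
    apply: mulr_ge0; [apply: mulr_ge0 => //; lra | exact: ltW].
  have hj := ltn_ord j.
  have hGy := claimG _ _ _ _ hmet hB hfin hsupp c Cd D K2 (thi j) (S j) c1 Cd1 D1 K20 (thge0 j hj)
     (fun x r hx r0 r1 => (proj2 (hK j hj x r hx r0 r1))) F2 F3 y r hy2 r0 r1.
  have hmono : (Hmeas d mu (thi j) (cball d xu (c * r) `&` S j) <=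
                Hmeas d mu (thi j) (cball d y (2 * c * r) `&` S j))%E.
    apply: Hmeas_mono; apply: setSI; apply: (ball_sub _ _ _ hmet).
    move: hy1; rewrite /cball /= (dsym _ _ _ hmet) => hy1; lra.
  have hmy : fine (mu (cball d y (2 * c * r))) <= D * mx.
    rewrite -lee_fin -(muE _ _ _ _ hfin) EFinM -(muE _ _ _ _ hfin).
    apply: (le_trans _ (F1 x r r0 r1)); apply: le_outer_measure.
    apply: (ball_sub _ _ _ hmet).
    move: hy1; rewrite /cball /= => hy1.
    have := dtri _ _ _ hmet x xu y; rewrite (dsym _ _ _ hmet x xu); lra.
  apply: (@le_trans _ _ ((powR 2 (k%:R * (theta - thi j)))%:E *
     (A * fine (mu (cball d y (2 * c * r))) * powR r (- thi j))%:E)%E).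
    apply: lee_wpmul2l; first by rewrite lee_fin powR_ge0.
    exact: (le_trans hmono hGy).
  rewrite -EFinM lee_fin.
  have e : powR 2 (k%:R * (theta - thi j)) * (A * fine (mu (cball d y (2 * c * r))) * powR r (- thi j))
        = A * fine (mu (cball d y (2 * c * r))) * (powR 2 (k%:R * (theta - thi j)) * powR r (- thi j)).
    by ring.
  rewrite e pow_id -/T.
  apply: ler_wpM2r; first exact: ltW.
  by rewrite -[A * D * mx]mulrA; apply: ler_wpM2l.
have hupper : (mk d mu N theta thi S k (cball d xu (c * r)) <= (N%:R * (A * D * mx * T))%:E)%E.
  rewrite /mk; apply: (@le_trans _ _ (\sum_(j < N) (A * D * mx * T)%:E)%E).
    by apply: lee_sum => j _; exact: hterm.
  by rewrite sumEFin sumr_const card_ord mulr_natl.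
have hlow := proj1 (hK i hi x r hx r0 r1).
apply: (le_trans hupper).
apply: (@le_trans _ _ (((N%:R * A * D / K1 + 1) * powR 2 (k%:R * (theta - thi i)))%:E
   * (K1%:E * (mu (cball d x r) * (powR r (- thi i))%:E)))%E); last first.
  apply: lee_wpmul2l => //; rewrite lee_fin; apply: mulr_ge0; last exact: powR_ge0.
  have : 0 <= (N%:R * A * D) / K1 by apply: divr_ge0 => //; exact: ltW.
  lra.
rewrite (muE _ _ _ _ hfin) -/mx -!EFinM lee_fin.
have e : (N%:R * A * D / K1 + 1) * powR 2 (k%:R * (theta - thi i)) * (K1 * (mx * powR r (- thi i)))
   = (N%:R * A * D / K1 + 1) * K1 * mx * (powR 2 (k%:R * (theta - thi i)) * powR r (- thi i)) by ring.
rewrite e pow_id -/T.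
have h0' : 0 <= K1 * mx * T by apply: mulr_ge0; [apply: mulr_ge0|]; apply: ltW.
have e3 : (N%:R * A * D / K1 + 1) * K1 * mx * T = N%:R * A * D * mx * T + K1 * mx * T.
  by field; rewrite gt_eqF.
have e2 : N%:R * (A * D * mx * T) = N%:R * A * D * mx * T by ring.
rewrite e3 e2; lra.
Qed.
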